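(* Let $Z=\{(x_i,y_i)\}_{i=1,\dots,N}$ be a finite sample with $x_i\in\mathcal{X}$ and $y_i\in\{-1,1\}$, and let $h^t,h^s:\mathcal{X}\to\{-1,1\}$ be two classifiers (teacher and student). Assume $R_Z(h^t)>0$ and $R^{h^t}_{acc(h^t)}(h^s)>0$. Then $$R_{Z}(h^s)\leq R_{Z}(h^t)\iff \frac{R_{err(h^t)}^{h^t}(h^s)}{R_{acc(h^t)}^{h^t}(h^s)}\geq \frac{1}{R_{Z}(h^t)}-1.$$
   Context: For a finite nonempty (multi)set $S$ of labelled pairs $(x,y)$ and functions $f,g:\mathcal{X}\to\{-1,1\}$, define the empirical disagreement risk $R^{f}_{S}(g):=\frac{1}{|S|}\sum_{(x,y)\in S}\mathbb{1}[f(x)\neq g(x)]$, and the empirical risk $R_S(g):=\frac{1}{|S|}\sum_{(x,y)\in S}\mathbb{1}[y\neq g(x)]$. Here $\mathbb{1}[\cdot]$ is $1$ if the condition holds and $0$ otherwise. The sets $acc(h^t):=\{(x,y)\in Z : h^t(x)=y\}$ and $err(h^t):=\{(x,y)\in Z : h^t(x)\neq y\}$ are the sub-multisets of $Z$ on which the teacher is correct, respectively wrong. *)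

(* Defs.v *)
From mathcomp Require Import all_boot all_order all_algebra.
Set Implicit Arguments. Unset Strict Implicit. Unset Printing Implicit Defensive.
Import Order.TTheory GRing.Theory Num.Theory.
Local Open Scope ring_scope.

(* A sample is a finite multiset of labelled pairs, represented as a list
   (multiplicities = repetitions).  Labels and classifier outputs are integers,
   constrained to {-1,1} by hypotheses in the theorem. *)
Definition is_label (y : int) : bool := (y == 1) || (y == -1).

Definition disagree_risk (R : realFieldType) (X : Type)
  (f g : X -> int) (S : seq (X * int)) : R :=
  (\sum_(p <- S) (f p.1 != g p.1)%:R) / (size S)%:R.

Definition emp_risk (R : realFieldType) (X : Type)
  (g : X -> int) (S : seq (X * int)) : R :=
  (\sum_(p <- S) (p.2 != g p.1)%:R) / (size S)%:R.

Definition acc (X : Type) (h : X -> int) (Z : seq (X * int)) :=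
  [seq p <- Z | h p.1 == p.2].
Definition err (X : Type) (h : X -> int) (Z : seq (X * int)) :=
  [seq p <- Z | h p.1 != p.2].

(* Main.v *)
Require Import Defs.
From mathcomp Require Import all_boot all_order all_algebra.
From mathcomp Require Import ring lra.
Import Order.TTheory GRing.Theory Num.Theory.
Local Open Scope ring_scope.

Lemma size_sum (R : realFieldType) (T : Type) (s : seq T) :
  (size s)%:R = \sum_(p <- s) (1 : R).
Proof.
elim: s => [|x s IH]; first by rewrite big_nil.
by rewrite big_cons /= -IH -natr1 addrC.
Qed.

Lemma sum_ext_all (R : realFieldType) (T : Type) (P : pred T) (F G : T -> R) (s : seq T) :
  all P s -> (forall p, P p -> F p = G p) -> \sum_(p <- s) F p = \sum_(p <- s) G p.
Proof.
move=> hs hFG; elim: s hs => [|x s IH] /=; first by rewrite !big_nil.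
by case/andP=> hx hs; rewrite !big_cons hFG // IH.
Qed.

Lemma lab3 {a b c : int} : is_label b -> is_label c -> is_label a ->
  a != b -> (a != c) = (b == c).
Proof.
by rewrite /is_label => /orP[]/eqP-> /orP[]/eqP-> /orP[]/eqP->.
Qed.

Theorem theorem1 (R : realFieldType) (X : Type) (Z : seq (X * int))
  (ht hs : X -> int)
  (hZ : all (fun p => is_label p.2) Z)
  (hht : forall x, is_label (ht x))
  (hhs : forall x, is_label (hs x))
  (hpos1 : 0 < emp_risk R ht Z)
  (hpos2 : 0 < disagree_risk R ht hs (acc ht Z)) :
  emp_risk R hs Z <= emp_risk R ht Z <->
  disagree_risk R ht hs (err ht Z) / disagree_risk R ht hs (acc ht Z)
    >= 1 / emp_risk R ht Z - 1.
Proof.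
set d := fun p : X * int => ((ht p.1 != hs p.1)%:R : R).
set a := \sum_(p <- Z | ht p.1 == p.2) d p.
set e := \sum_(p <- Z | ht p.1 != p.2) d p.
set A := \sum_(p <- Z | ht p.1 == p.2) (1 : R).
set E := \sum_(p <- Z | ht p.1 != p.2) (1 : R).
have hN : (size Z)%:R = A + E :> R.
  by rewrite size_sum (bigID (fun p : X * int => ht p.1 == p.2)) /=.
have hA : (size (acc ht Z))%:R = A by rewrite size_sum /acc big_filter.
have hE : (size (err ht Z))%:R = E by rewrite size_sum /err big_filter.
have hrt : emp_risk R ht Z = E / (A + E).
  rewrite /emp_risk hN (bigID (fun p : X * int => ht p.1 == p.2)) /=.
  rewrite big1 ?add0r; last by move=> p /eqP ->; rewrite eqxx.
  congr (_ / _); apply: eq_bigr => p hp; rewrite eq_sym hp //.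
have hrs : emp_risk R hs Z = (a + (E - e)) / (A + E).
  rewrite /emp_risk hN.
  rewrite (@sum_ext_all R _ (fun p => is_label p.2) _
    (fun p => if ht p.1 == p.2 then d p else 1 - d p)) //; last first.
    move=> p hp; case: ifP => h.
      by rewrite /d (eqP h).
    rewrite /d (lab3 (hht p.1) (hhs p.1) hp); last by rewrite eq_sym h.
    by case: eqP => _ /=; rewrite ?subrr ?subr0.
  rewrite (bigID (fun p : X * int => ht p.1 == p.2)) /=.
  congr ((_ + _) / _).
    by apply: eq_bigr => p ->.
  rewrite /E /e -sumrB; apply: eq_bigr => p /negbTE -> //.
have hda : disagree_risk R ht hs (acc ht Z) = a / A.
  by rewrite /disagree_risk hA /acc big_filter.
have hde : disagree_risk R ht hs (err ht Z) = e / E.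
  by rewrite /disagree_risk hE /err big_filter.
rewrite hrs hrt hda hde.
rewrite hda in hpos2; rewrite hrt in hpos1.
have A0 : 0 <= A by apply: sumr_ge0.
have E0 : 0 <= E by apply: sumr_ge0.
have a0 : 0 <= a by apply: sumr_ge0 => p _; apply: ler0n.
have Apos : 0 < A.
  rewrite lt_neqAle A0 andbT; apply/eqP => hA0; move: hpos2; rewrite -hA0 invr0 mulr0 ltxx //.
have Epos : 0 < E.
  rewrite lt_neqAle E0 andbT; apply/eqP => hE0; move: hpos1; rewrite -hE0 mul0r ltxx //.
have apos : 0 < a.
  rewrite lt_neqAle a0 andbT; apply/eqP => ha0; move: hpos2; rewrite -ha0 mul0r ltxx //.
have NE : 0 < A + E by rewrite addr_gt0.
have -> : 1 / (E / (A + E)) - 1 = A / E.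
  field; rewrite ?gt_eqF //.
have -> : e / E / (a / A) = (e / a) * (A / E).
  field; rewrite ?gt_eqF //.
rewrite ler_pM2r ?invr_gt0 // -{1}(mul1r (A / E)) ler_pM2r ?divr_gt0 // ler_pdivlMr // mul1r.
split => h; lra.
Qed.
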